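(* Let $\lambda$ be a partition with at most $n$ parts and $\mu\in S_n(\lambda)$. Then $f^*_\mu\in V^*_\lambda$.
   Context: Polynomials are in $x_1,\dots,x_n$ over $\mathbb{Q}(q,t)$; $\mathcal{P}_n^{(d)}$ denotes polynomials of degree at most $d$. For $\mu\in\mathbb{N}^n$ let $k_i(\mu)=\#\{j<i:\mu_j>\mu_i\}+\#\{j>i:\mu_j\ge\mu_i\}$ and $\widetilde\mu=(q^{\mu_1}t^{-k_1(\mu)},\dots,q^{\mu_n}t^{-k_n(\mu)})$. For $\mu\in\mathbb{N}^n$, $|\mu|=d$, $E^*_\mu$ is the unique polynomial in $\mathcal{P}_n^{(d)}$ with coefficient of $x^\mu$ equal to $1$ and $E^*_\mu(\widetilde\nu)=0$ for all $\nu\in\mathbb{N}^n$, $|\nu|\le d$, $\nu\ne\mu$. $S_n$ acts on compositions by $\sigma\cdot\mu=(\mu_{\sigma^{-1}(1)},\dots,\mu_{\sigma^{-1}(n)})$ and on polynomials by permuting variables; $s_i=(i,i+1)$; $T_i=t-\frac{tx_i-x_{i+1}}{x_i-x_{i+1}}(1-s_i)$; $T_\sigma=T_{i_1}\cdots T_{i_\ell}$ for a reduced word $\sigma=s_{i_1}\cdots s_{i_\ell}$. $S_n(\lambda)$ is the set of rearrangements of $\lambda$; for $\mu\in S_n(\lambda)$, $\sigma_\mu$ is the shortest permutation with $\sigma_\mu(\lambda)=\mu$ and $f^*_\mu=T_{\sigma_\mu}E^*_\lambda$. For a partition $\lambda$ of size $d$, $V^*_\lambda=\{f\in\mathcal{P}_n^{(d)}: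 f(\widetilde\nu)=0\ \forall\nu\in\mathbb{N}^n, |\nu|\le|\lambda|, \nu\notin S_n(\lambda)\}$. *)

(* Defs.v *)
From HB Require Import structures.
From mathcomp Require Import all_boot all_order all_algebra all_fingroup.
From mathcomp Require Import fraction.
From mathcomp.multinomials Require Import mpoly.
From Stdlib Require Import ClassicalEpsilon.

Set Implicit Arguments.
Unset Strict Implicit.
Unset Printing Implicit Defensive.

Import Order.TTheory GRing.Theory.
Local Open Scope ring_scope.

(* The base field Q(q,t) = Frac(Q[q][t]). *)
Definition K : fieldType := {fraction {poly {poly rat}}}.
Definition qK : K := FracField.tofrac ((('X : {poly rat})%:P) : {poly {poly rat}}).
Definition tK : K := FracField.tofrac ('X : {poly {poly rat}}).

Section Defs.
Variable n : nat.

Definition kidx (mu : 'X_{1..n}) (i : 'I_n) : nat :=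
  #|[pred j : 'I_n | ((j < i)%N && (mu i < mu j)%N) || ((i < j)%N && (mu i <= mu j)%N)]|.

Definition tilde (mu : 'X_{1..n}) : 'I_n -> K :=
  fun i => qK ^+ (mu i) * tK ^- (kidx mu i).

Definition deg_le (d : nat) (f : {mpoly K[n]}) : Prop := (msize f <= d.+1)%N.

Definition is_Estar (lam : 'X_{1..n}) (E : {mpoly K[n]}) : Prop :=
  [/\ deg_le (mdeg lam) E, E@_lam = 1 &
      forall nu : 'X_{1..n}, (mdeg nu <= mdeg lam)%N -> nu != lam ->
        E.@[tilde nu] = 0].

Definition is_partition (lam : 'X_{1..n}) : Prop :=
  forall i j : 'I_n, (i <= j)%N -> (lam j <= lam i)%N.

Definition cact (s : 'S_n) (mu : 'X_{1..n}) : 'X_{1..n} :=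
  [multinom mu ((s^-1)%g j) | j < n].

(* Coxeter length = number of inversions *)
Definition inversions (s : 'S_n) : nat :=
  #|[pred ij : 'I_n * 'I_n | (ij.1 < ij.2)%N && (s ij.2 < s ij.1)%N]|.

(* the index i+1 (only meaningful when i.+1 < n) *)
Definition nextI (i : 'I_n) : 'I_n := insubd i i.+1.

Definition sgen (i : 'I_n) : 'S_n := tperm i (nextI i).

Definition valid_word (w : seq 'I_n) : bool := all (fun i : 'I_n => (i.+1 < n)%N) w.

(* s_{i1} \o s_{i2} \o ... \o s_{il} as a function (mathcomp: (p * q) x = q (p x)) *)
Definition perm_of_word (w : seq 'I_n) : 'S_n :=
  foldr (fun i p => (p * sgen i)%g) 1%g w.

Definition reduced_word (s : 'S_n) (w : seq 'I_n) : Prop :=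
  [/\ valid_word w, perm_of_word w = s & size w = inversions s].

Definition is_sigma_mu (lam mu : 'X_{1..n}) (s : 'S_n) : Prop :=
  cact s lam = mu /\ forall s', cact s' lam = mu -> (inversions s <= inversions s')%N.

Definition spoly (i : 'I_n) (f : {mpoly K[n]}) : {mpoly K[n]} := msym (sgen i) f.

(* the divided-difference part of T_i: the polynomial
   (t x_i - x_{i+1}) / (x_i - x_{i+1}) * (1 - s_i) f *)
Definition Tdiv (i : 'I_n) (f : {mpoly K[n]}) : {mpoly K[n]} :=
  epsilon (inhabits 0) (fun g : {mpoly K[n]} =>
    ('X_i - 'X_(nextI i)) * g = (tK *: 'X_i - 'X_(nextI i)) * (f - spoly i f)).

Definition Top (i : 'I_n) (f : {mpoly K[n]}) : {mpoly K[n]} := tK *: f - Tdiv i f.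

Definition Tword (w : seq 'I_n) (f : {mpoly K[n]}) : {mpoly K[n]} :=
  foldr Top f w.

Definition inVstar (lam : 'X_{1..n}) (f : {mpoly K[n]}) : Prop :=
  deg_le (mdeg lam) f /\
  forall nu : 'X_{1..n}, (mdeg nu <= mdeg lam)%N ->
    ~ (exists s : 'S_n, cact s lam = nu) -> f.@[tilde nu] = 0.

End Defs.

(* Main.v *)
Require Import Defs.
From HB Require Import structures.
From mathcomp Require Import all_boot all_order all_algebra all_fingroup.
From mathcomp Require Import fraction.
From mathcomp.multinomials Require Import mpoly.
From mathcomp Require Import zify.
From Stdlib Require Import ClassicalEpsilon.
Set Implicit Arguments. Unset Strict Implicit. Unset Printing Implicit Defensive.
Import Order.TTheory GRing.Theory.
Local Open Scope ring_scope.


Lemma tK_neq0 : tK != 0.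
Proof. by rewrite /tK tofrac_eq0 polyX_eq0. Qed.
Lemma qK_neq0 : qK != 0.
Proof. by rewrite /qK tofrac_eq0 polyC_eq0 polyX_eq0. Qed.

Lemma qt_poly_inj a b k k' :
  ((('X : {poly rat})%:P) ^+ a * 'X ^+ k' : {poly {poly rat}}) =
  (('X : {poly rat})%:P) ^+ b * 'X ^+ k -> a = b /\ k = k'.
Proof.
rewrite -!rmorphXn => h.
have := congr1 (fun p : {poly {poly rat}} => p`_k') h => /=.
rewrite !coefCM !coefXn eqxx.
case: eqP => [->|_]; last by move/eqP; rewrite mulr1 mulr0 expf_eq0 polyX_eq0 andbF.
rewrite !mulr1 => /(congr1 (fun p : {poly rat} => size p)).
by rewrite !size_polyXn => -[].
Qed.

Lemma qt_inj a b k k' : qK ^+ a * tK ^- k = qK ^+ b * tK ^- k' -> a = b /\ k = k'.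
Proof.
move=> h.
have ht := tK_neq0.
have h2 : qK ^+ a * tK ^+ k' = qK ^+ b * tK ^+ k.
  have u1 : tK ^+ k != 0 by rewrite expf_neq0.
  have u2 : tK ^+ k' != 0 by rewrite expf_neq0.
  move: h => /(congr1 (fun z => z * (tK ^+ k * tK ^+ k'))).
  rewrite -!mulrA (mulrA (tK ^- k)) mulVf // mul1r.
  rewrite (mulrC (tK ^+ k)) (mulrA (tK ^- k')) mulVf // mul1r //.
apply: qt_poly_inj; apply/eqP; rewrite -(tofrac_eq (R := {poly {poly rat}})).
by rewrite !rmorphM !rmorphXn /=; apply/eqP; exact: h2.
Qed.


Lemma nextI_val n (i : 'I_n) : (i.+1 < n)%N -> val (nextI i) = i.+1.
Proof. by move=> hi; rewrite /nextI val_insubd hi. Qed.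

Lemma msym_XU n (s : 'S_n) (k : 'I_n) : msym s ('X_k : {mpoly K[n]}) = 'X_(s k).
Proof.
rewrite msymX; congr mpolyX; apply/mnmP => l; rewrite !mnmE.
by rewrite -(inj_eq (@perm_inj _ s)) permKV.
Qed.

Lemma meval_msym n (s : 'S_n) (p : {mpoly K[n]}) (x : 'I_n -> K) :
  (msym s p).@[x] = p.@[fun k => x (s k)].
Proof.
rewrite -[msym s p]comp_mpoly_id msym_mPo comp_mpoly_meval.
by apply: meval_eq => k; rewrite !tnth_mktuple mevalXU.
Qed.

Definition Dprop n (i : 'I_n) (f : {mpoly K[n]}) :=
  exists h, ('X_i - 'X_(nextI i)) * h = f - msym (sgen i) f.

Lemma Dprop_mul n (i : 'I_n) f g : Dprop i f -> Dprop i g -> Dprop i (f * g).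
Proof.
move=> [h1 e1] [h2 e2]; exists (f * h2 + h1 * msym (sgen i) g).
by rewrite msymM mulrDr mulrCA e2 [_ * (h1 * _)]mulrA e1 mulrBr mulrBl addrA subrK.
Qed.

Lemma Dprop_XU n (i : 'I_n) k : (i.+1 < n)%N -> Dprop i 'X_k.
Proof.
move=> hi; rewrite /Dprop msym_XU /sgen.
case: tpermP => [->|->|/eqP? /eqP?].
- by exists 1; rewrite mulr1.
- by exists (-1); rewrite mulrN1 opprB.
- by exists 0; rewrite mulr0 subrr.
Qed.

Lemma Dprop_all n (i : 'I_n) f : (i.+1 < n)%N -> Dprop i f.
Proof.
move=> hi; elim/mpolyind: f => [|c m p _ _ [h e]].
  by exists 0; rewrite mulr0 msym0 subrr.
have [h' e'] : Dprop i 'X_[m].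
  rewrite (mpolyXE_id _ m); apply: (big_ind (Dprop i)).
  - by exists 0; rewrite mulr0 msym1 subrr.
  - exact: Dprop_mul.
  - move=> k _; elim: (m k) => [|ee IH].
      exists 0. rewrite mulr0 expr0 msym1 subrr //.
    rewrite exprS; exact: (Dprop_mul (Dprop_XU k hi) IH).
exists (c *: h' + h); rewrite msymD msymZ mulrDr -scalerAr e' e.
by rewrite opprD addrACA -scalerBr.
Qed.

Lemma Tdiv_spec n (i : 'I_n) f : (i.+1 < n)%N ->
  ('X_i - 'X_(nextI i)) * Tdiv i f = (tK *: 'X_i - 'X_(nextI i)) * (f - spoly i f).
Proof.
move=> hi; rewrite /Tdiv; apply: (epsilon_spec (inhabits 0) (fun g : {mpoly K[n]} =>
    ('X_i - 'X_(nextI i)) * g = (tK *: 'X_i - 'X_(nextI i)) * (f - spoly i f))).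
have [h e] := Dprop_all f hi.
exists ((tK *: 'X_i - 'X_(nextI i)) * h).
by rewrite /spoly -e mulrCA.
Qed.




Lemma kidx_key n (mu : 'X_{1..n}) l :
  kidx mu l = #|[pred m : 'I_n | (mu l < mu m)%N || ((mu l == mu m) && (l < m)%N)]|.
Proof.
apply: eq_card => m; rewrite !inE.
have [ml|lm|/val_inj ->] := ltngtP m l; rewrite ?ltnn ?eqxx /=.
- by rewrite andbF !orbF.
- by rewrite andbT orbC leq_eqVlt.
- by [].
Qed.

Lemma card_perm_pre n (s : 'S_n) (A : pred 'I_n) :
  #|[pred m | A (s m)]| = #|A|.
Proof.
have := card_preimset [set x | A x] (@perm_inj _ s).
move=> e; rewrite -[#|A|](@eq_card _ [set x | A x]); last by move=> x; rewrite inE.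
rewrite -e; apply: eq_card => x; by rewrite !inE.
Qed.

Lemma kidx_eq n (mu : 'X_{1..n}) (i : 'I_n) : (i.+1 < n)%N ->
  mu i = mu (nextI i) -> kidx mu i = (kidx mu (nextI i)).+1.
Proof.
move=> hi e; have hj := nextI_val hi.
have hj' : nat_of_ord (nextI i) = i.+1 := hj.
rewrite !kidx_key (cardD1 (nextI i)) inE e ltnn eqxx hj' leqnn /= add1n; congr _.+1.
apply: eq_card => m; rewrite !inE.
have [->|nm] := eqVneq m (nextI i); first by rewrite /= ltnn hj' ltnn andbF orbF.
rewrite /=; congr (_ || (_ && _)).
have : nat_of_ord m != nat_of_ord (nextI i) by [].
rewrite hj'; lia.
Qed.

Lemma ord_neq n (a b : 'I_n) : a <> b -> (nat_of_ord a <> nat_of_ord b).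
Proof. by move=> h e; apply: h; apply: val_inj. Qed.

Lemma ord_swap n (i : 'I_n) (mu : 'X_{1..n}) l m : (i.+1 < n)%N ->
  mu i != mu (nextI i) ->
  mu (sgen i l) = mu (sgen i m) -> (l < m)%N = (sgen i l < sgen i m)%N.
Proof.
move=> hi hne; have hj' : nat_of_ord (nextI i) = i.+1 := nextI_val hi.
rewrite /sgen.
case: (tpermP i (nextI i) l) => [el|el|nli nlj];
case: (tpermP i (nextI i) m) => [em|em|nmi nmj]; subst => //.
all: try by move=> h; rewrite h eqxx in hne.
all: try by move=> h; rewrite h eqxx in hne.
all: move=> _; rewrite ?hj'.
all: try move: (ord_neq nli) (ord_neq nlj); try move: (ord_neq nmi) (ord_neq nmj).
all: rewrite ?hj' => *; apply/idP/idP; lia.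
Qed.

Lemma cact_sgen n (i : 'I_n) (mu : 'X_{1..n}) l : cact (sgen i) mu l = mu (sgen i l).
Proof. by rewrite /cact mnmE /sgen tpermV. Qed.

Lemma kidx_swap n (mu : 'X_{1..n}) (i : 'I_n) l : (i.+1 < n)%N ->
  mu i != mu (nextI i) -> kidx (cact (sgen i) mu) l = kidx mu (sgen i l).
Proof.
move=> hi hne; rewrite !kidx_key -[in RHS](card_perm_pre (sgen i)).
apply: eq_card => m; rewrite !inE !cact_sgen.
case: (eqVneq (mu (sgen i l)) (mu (sgen i m))) => [e|ne] /= //.
by rewrite -(ord_swap hi hne e).
Qed.


Lemma tilde_swap n (mu : 'X_{1..n}) (i : 'I_n) l : (i.+1 < n)%N ->
  mu i != mu (nextI i) -> tilde (cact (sgen i) mu) l = tilde mu (sgen i l).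
Proof. by move=> hi hne; rewrite /tilde cact_sgen kidx_swap. Qed.

Lemma cact_invol n (i : 'I_n) (mu : 'X_{1..n}) : cact (sgen i) (cact (sgen i) mu) = mu.
Proof. by apply/mnmP => l; rewrite !cact_sgen /sgen tpermK. Qed.

Lemma cact_comp n (s1 s2 : 'S_n) (mu : 'X_{1..n}) :
  cact s2 (cact s1 mu) = cact (s1 * s2)%g mu.
Proof. by apply/mnmP => l; rewrite /cact !mnmE invMg permM. Qed.

Lemma cact1 n (mu : 'X_{1..n}) : cact 1%g mu = mu.
Proof. by apply/mnmP => l; rewrite /cact !mnmE invg1 perm1. Qed.

Lemma mdeg_cact n (s : 'S_n) (mu : 'X_{1..n}) : mdeg (cact s mu) = mdeg mu.
Proof. exact: mdeg_mperm. Qed.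

Lemma msize_msym n (s : 'S_n) (p : {mpoly K[n]}) : (msize (msym s p) <= msize p)%N.
Proof.
rewrite [X in (X <= _)%N]msizeE.
apply/bigmax_leqP_seq => m hm _.
move: hm; rewrite mcoeff_msupp mcoeff_sym -mcoeff_msupp => hm.
have := @msize_mdeg_lt n K p _ hm.
by rewrite mdeg_mperm.
Qed.


Lemma msizeM_le' n (p q : {mpoly K[n]}) : (msize (p * q) <= (msize p + msize q).-1)%N.
Proof.
have [->|p0] := eqVneq p 0; first by rewrite mul0r msize0.
have [->|q0] := eqVneq q 0; first by rewrite mulr0 msize0.
by rewrite (msizeM p0 q0).
Qed.


Lemma nextI_neq n (i : 'I_n) : (i.+1 < n)%N -> nextI i != i.
Proof.
move=> hi; apply/eqP => e; have := nextI_val hi; rewrite e => h.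
have : nat_of_ord i = i.+1 := h. lia.
Qed.

Lemma msize_u n (i : 'I_n) : (i.+1 < n)%N ->
  (2 <= msize ('X_i - 'X_(nextI i) : {mpoly K[n]}))%N.
Proof.
move=> hi.
have hc : ('X_i - 'X_(nextI i) : {mpoly K[n]})@_U_(i) = 1.
  rewrite mcoeffB !mcoeffXU eqxx (negbTE (nextI_neq hi)) subr0 //.
have hm : U_(i)%MM \in msupp ('X_i - 'X_(nextI i) : {mpoly K[n]}).
  by rewrite mcoeff_msupp hc oner_neq0.
by have := msize_mdeg_lt hm; rewrite mdeg1.
Qed.

Lemma natfact a b c d k : ((a + b).-1 <= (c + d).-1)%N -> (c <= 2)%N ->
  (d <= k)%N -> (1 < a)%N -> (b <= k)%N.
Proof. rewrite -!subn1; lia. Qed.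

Lemma msize_Tdiv n (i : 'I_n) (f : {mpoly K[n]}) : (i.+1 < n)%N ->
  (msize (Tdiv i f) <= msize f)%N.
Proof.
move=> hi; have e := @Tdiv_spec n i f hi.
set g := Tdiv i f in e *.
set u := ('X_i - 'X_(nextI i) : {mpoly K[n]}) in e.
set v := (tK *: 'X_i - 'X_(nextI i) : {mpoly K[n]}) in e.
set w := (f - spoly i f) in e.
have [g0|g0] := eqVneq g 0; first by rewrite g0 msize0.
have hu := msize_u hi; rewrite -/u in hu.
have u0 : u != 0 by apply/eqP => u0; rewrite u0 msize0 in hu.
have h1 := msizeM u0 g0.
have h2 := msizeM_le' v w.
rewrite -e h1 in h2.
have hv : (msize v <= 2)%N.
  apply: (leq_trans (msizeD_le _ _)); rewrite msizeN geq_max.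
  rewrite (leq_trans (msizeZ_le _ _)) ?msizeX ?mdeg1 //.
have hw : (msize w <= msize f)%N.
  apply: (leq_trans (msizeD_le _ _)); rewrite msizeN geq_max leqnn.
  exact: msize_msym.
exact: (natfact h2 hv hw hu).
Qed.


Lemma Top_V n (lam : 'X_{1..n}) (i : 'I_n) (f : {mpoly K[n]}) : (i.+1 < n)%N ->
  inVstar lam f -> inVstar lam (Top i f).
Proof.
move=> hi [hd hv]; split.
  rewrite /deg_le /Top; apply: (leq_trans (msizeD_le _ _)); rewrite msizeN geq_max.
  by rewrite (leq_trans (msizeZ_le _ _) hd) (leq_trans (msize_Tdiv f hi) hd).
move=> nu hnu hnr.
set x := tilde nu.
have fx : f.@[x] = 0 := hv nu hnu hnr.
have e := congr1 (meval x) (@Tdiv_spec n i f hi).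
rewrite !mevalM !mevalB mevalZ !mevalXU /spoly meval_msym fx in e.
rewrite /Top mevalB mevalZ fx mulr0 sub0r; apply/eqP; rewrite oppr_eq0; apply/eqP.
move: e; set G := (Tdiv i f).@[x]; set j := nextI i => e.
have hj := nextI_val hi.
suff [hne he] : x i != x j /\ (x i - x j) * G = 0.
  by move/eqP: he; rewrite mulf_eq0 subr_eq0 (negbTE hne) => /eqP.
case: (eqVneq (nu i) (nu j)) => hnij.
  have hk := kidx_eq hi hnij.
  split.
    apply/eqP => h; have [_ hk'] := qt_inj (h : qK ^+ nu i * tK ^- kidx nu i = qK ^+ nu j * tK ^- kidx nu j).
    rewrite hk /j in hk'; lia.
  suff hxi : tK * x i = x j by rewrite e hxi subrr mul0r.
  rewrite /x /tilde hk -hnij exprS invfM.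
  by rewrite mulrCA (mulrA tK) mulfV ?tK_neq0 // mul1r.
split.
  apply/eqP => h; have [hk' _] := qt_inj (h : qK ^+ nu i * tK ^- kidx nu i = qK ^+ nu j * tK ^- kidx nu j).
  by rewrite hk' eqxx in hnij.
rewrite e; have -> : f.@[fun k => x (sgen i k)] = f.@[tilde (cact (sgen i) nu)].
  by apply: meval_eq => k; rewrite /x tilde_swap.
rewrite hv ?subrr ?mulr0 // ?mdeg_cact //.
move=> [s hs]; apply: hnr; exists (s * sgen i)%g.
by rewrite -cact_comp hs cact_invol.
Qed.

Lemma Tword_V n (lam : 'X_{1..n}) (w : seq 'I_n) (f : {mpoly K[n]}) :
  valid_word w -> inVstar lam f -> inVstar lam (Tword w f).
Proof.
elim: w => [|a w IH] //= /andP [ha hw] hf.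
exact: (Top_V ha (IH hw hf)).
Qed.

Unset Implicit Arguments.

Theorem lemma2p9 (n : nat) (lam mu : 'X_{1..n}) (E : {mpoly K[n]})
  (sigma : 'S_n) (w : seq 'I_n) :
  is_partition lam ->
  (exists s : 'S_n, cact s lam = mu) ->
  is_Estar lam E ->
  is_sigma_mu lam mu sigma ->
  reduced_word sigma w ->
  inVstar lam (Tword w E).
Proof.
move=> _ _ [hd _ hv] _ [hw _ _].
apply: Tword_V => //; split => // nu hnu hnr.
apply: hv => //; apply/eqP => e; apply: hnr; exists 1%g; by rewrite cact1 e.
Qed.
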